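(* Under the hypotheses that $\mathcal M$ is unichain and indexable and $\widehat{\mathcal M}$ has the same rewards and same support as $\mathcal M$ and satisfies Assumption (A): for every compact interval $[a,b]\subset\mathbb R$ there exists a constant $c_\lambda$ depending only on $\mathcal M$, $a$ and $b$ such that for every state $s$ and every policy $\pi\subseteq\mathcal S$, $$\max_{\lambda\in[a,b]}|\alpha^\pi_s(\lambda)-\hat\alpha^\pi_s(\lambda)|\le c_\lambda\|\mathcal M-\widehat{\mathcal M}\|_\infty.$$
   Context: Setting. An MDP is $\mathcal M=(\mathcal S,\{0,1\},(P^a)_a,(r^a)_a)$, finite $\mathcal S$, row-stochastic $P^0,P^1$, rewards $r^0,r^1\in\mathbb R^{\mathcal S}$. A policy is a subset $\pi\subseteq\mathcal S$ of states where action 1 is played, inducing $P^\pi$, $r^\pi$; $\mathcal M$ is unichain if every $P^\pi$ has a single recurrent class. For $\lambda\in\mathbb R$, $\mathcal M(\lambda)$ has the same transitions and rewards $r^1-\lambda\mathbf 1$ (action 1), $r^0$ (action 0). For a unichain policy, bias $b^\pi(\lambda)$ (up to additive constant) solves $g^\pi\mathbf 1+b^\pi=r^\pi+P^\pi b^\pi$ in $\mathcal M(\lambda)$; activation advantage $\alpha^\pi_s(\lambda)=r^1_s-\lambda-r^0_s+(P^1_{s,\cdot}-P^0_{s,\cdot})\cdot b^\pi(\lambda)$. BO (bias optimal) policy in $\mathcal M(\lambda)$: gain optimal and bias-maximal among gain-optimal policies; for unichain MDPs, $\pi$ is BO iff $\alpha^\pi_s(\lambda)\ge0$ for $s\in\pi$,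 $\le0$ for $s\notin\pi$. $\alpha^*_s(\lambda)$ is $\alpha^\pi_s(\lambda)$ for any BO $\pi$. $\mathcal M$ indexable: for each $s$ there is $\lambda_s$ (Whittle index) with $\alpha^*_s(\lambda)>0$ for $\lambda<\lambda_s$, $<0$ for $\lambda>\lambda_s$. Hats denote objects in $\widehat{\mathcal M}=(\mathcal S,\{0,1\},(\hat P^a)_a,(r^a)_a)$ (and $\widehat{\mathcal M}(\lambda)$). $\|A\|_\infty=\max_s\sum_{s'}|A_{s,s'}|$; $\|\mathcal M-\widehat{\mathcal M}\|_\infty=\max_a\|P^a-\hat P^a\|_\infty$. Same support: $P^a_{s,s'}>0\iff\hat P^a_{s,s'}>0$. Diameter of unichain $P$ with recurrent class $\mathcal S_r$: $D(P)=\max_{s\in\mathcal S,s'\in\mathcal S_r}\mathbb E^P[\tau_{s,s'}]$. Assumption (A): $\|\mathcal M-\widehat{\mathcal M}\|_\infty\le\min\{1/\max_\pi D(P^\pi),\ \tfrac12\min\{|\lambda_s-\lambda_{s'}|:\lambda_s\ne\lambda_{s'}\}\}$. *)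

(* Defs.v *)
From HB Require Import structures.
From mathcomp Require Import all_boot all_order all_algebra.
From mathcomp Require Import reals.
Set Implicit Arguments. Unset Strict Implicit. Unset Printing Implicit Defensive.
Import Order.TTheory GRing.Theory Num.Theory.
Local Open Scope ring_scope.

Section MDP.
Variables (R : realType) (S : finType).

(* Transition kernels of a two-action MDP: action a : bool (false = 0, true = 1). *)
Definition kernel := bool -> S -> S -> R.
Definition rewards := bool -> S -> R.

Definition row_stochastic (M : S -> S -> R) : Prop :=
  (forall s s', 0 <= M s s') /\ (forall s, \sum_(s' : S) M s s' = 1).

Definition mdp_stochastic (P : kernel) : Prop := forall a, row_stochastic (P a).

(* A policy is a subset pi of states where action 1 is played. *)
Definition Ppol (P : kernel) (pi : {set S}) : S -> S -> R :=
  fun s s' => P (s \in pi) s s'.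

Definition rpol (r : rewards) (lam : R) (pi : {set S}) : S -> R :=
  fun s => if s \in pi then r true s - lam else r false s.

Definition edge (M : S -> S -> R) : rel S := fun s s' => 0 < M s s'.
Definition recurrent (M : S -> S -> R) (s : S) : Prop :=
  forall t, connect (edge M) s t -> connect (edge M) t s.
Definition unichain_chain (M : S -> S -> R) : Prop :=
  forall s t, recurrent M s -> recurrent M t -> connect (edge M) s t.
Definition unichain (P : kernel) : Prop :=
  forall pi : {set S}, unichain_chain (Ppol P pi).

Definition poisson (M : S -> S -> R) (rv : S -> R) (g : R) (b : S -> R) : Prop :=
  forall s, g + b s = rv s + \sum_(s' : S) M s s' * b s'.

Definition stationary (M : S -> S -> R) (mu : S -> R) : Prop :=
  (forall s, 0 <= mu s) /\ \sum_(s : S) mu s = 1 /\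
  (forall s', \sum_(s : S) mu s * M s s' = mu s').

(* gain g and (normalised) bias b: Poisson equation + mu.b = 0 for the
   stationary distribution mu (unique for unichain chains). *)
Definition gain_bias (M : S -> S -> R) (rv : S -> R) (g : R) (b : S -> R) : Prop :=
  poisson M rv g b /\ exists mu, stationary M mu /\ \sum_(s : S) mu s * b s = 0.

Definition bias_optimal (P : kernel) (r : rewards) (lam : R) (pi : {set S}) : Prop :=
  exists g b, gain_bias (Ppol P pi) (rpol r lam pi) g b /\
    forall (pi' : {set S}) g' b', gain_bias (Ppol P pi') (rpol r lam pi') g' b' ->
      g' <= g /\ (g' = g -> forall s, b' s <= b s).

Definition alpha (P : kernel) (r : rewards) (lam : R) (b : S -> R) (s : S) : R :=
  r true s - lam - r false s + \sum_(s' : S) (P true s s' - P false s s') * b s'.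

(* widx is the vector of Whittle indices of an indexable MDP:
   alpha*_s(lam) > 0 for lam < widx s and < 0 for lam > widx s, where
   alpha*_s(lam) = alpha^pi_s(lam) for any BO policy pi of M(lam). *)
Definition whittle_indices (P : kernel) (r : rewards) (widx : S -> R) : Prop :=
  forall (s : S) (lam : R) (pi : {set S}), bias_optimal P r lam pi ->
    forall g b, poisson (Ppol P pi) (rpol r lam pi) g b ->
      (lam < widx s -> 0 < alpha P r lam b s) /\
      (widx s < lam -> alpha P r lam b s < 0).

Definition indexable (P : kernel) (r : rewards) : Prop :=
  exists widx, whittle_indices P r widx.

Definition mx_inf_norm (A : S -> S -> R) : R :=
  \big[Num.max/0]_(s : S) \sum_(s' : S) `|A s s'|.

Definition mdp_dist (P Ph : kernel) : R :=
  Num.max (mx_inf_norm (fun s s' => P false s s' - Ph false s s'))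
          (mx_inf_norm (fun s s' => P true s s' - Ph true s s')).

Definition same_support (P Ph : kernel) : Prop :=
  forall a s s', (0 < P a s s') = (0 < Ph a s s').

(* expected hitting time m s = E[tau_{s,t}], tau = inf{k >= 0 : X_k = t},
   characterised by the first-step equations (unique solution when t is
   reachable from every state). *)
Definition hitting_times (M : S -> S -> R) (t : S) (m : S -> R) : Prop :=
  m t = 0 /\ forall s, s != t -> m s = 1 + \sum_(u : S) M s u * m u.

(* Assumption (A):
   d <= 1 / max_pi D(P^pi)  (written as d * E[tau_{s,s'}] <= 1 for all pi,
   all s and recurrent s'; this is the right reading also when D = 0), and
   d <= 1/2 min{|widx s - widx s'| : widx s <> widx s'}. *)
Definition assumptionA (P : kernel) (widx : S -> R) (Ph : kernel) : Prop :=
  (forall (pi : {set S}) (s t : S) (m : S -> R),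
      recurrent (Ppol P pi) t -> hitting_times (Ppol P pi) t m ->
      mdp_dist P Ph * m s <= 1) /\
  (forall s s', widx s != widx s' ->
      mdp_dist P Ph <= `|widx s - widx s'| / 2).

End MDP.

(* Main.v *)
Require Import Defs.
From HB Require Import structures.
From mathcomp Require Import all_boot all_order all_algebra.
From mathcomp Require Import reals.
From mathcomp Require Import ring lra.
Import Order.TTheory GRing.Theory Num.Theory.
Local Open Scope ring_scope.
Set Implicit Arguments. Unset Strict Implicit.

Section Aux.
Variables (R : realType) (S : finType).

Lemma exists_max (z : S -> R) (s : S) : exists s0, forall s', z s' <= z s0.
Proof.
case: (@arg_maxP _ _ _ s predT z isT) => i _ H; exists i => s'; exact: H.
Qed.

Lemma maxp (K : S -> S -> R) (t : S) (z : S -> R) :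
  (forall s u, 0 <= K s u) -> (forall s, \sum_u K s u = 1) ->
  (forall s, connect (edge K) s t) -> z t <= 0 ->
  (forall s, s != t -> z s <= \sum_u K s u * z u) -> forall s, z s <= 0.
Proof.
move=> K0 K1 Kc zt zs s.
have [s0 Hs0] := exists_max z s.
rewrite leNgt; apply/negP => zpos.
have Mpos : 0 < z s0 by apply: lt_le_trans zpos (Hs0 s).
have clos : forall u v, z u = z s0 -> edge K u v -> z v = z s0.
  move=> u v zu euv.
  have ut : u != t by apply/eqP => ut; move: zt; rewrite -ut zu leNgt Mpos.
  have H1 : \sum_w K u w * (z s0 - z w) = 0.
    apply/eqP; rewrite eq_le; apply/andP; split; last first.
      by apply: sumr_ge0 => w _; apply: mulr_ge0 => //; rewrite subr_ge0.
    have -> : \sum_w K u w * (z s0 - z w) = z s0 - \sum_w K u w * z w.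
      rewrite -[in RHS](mulr1 (z s0)) -(K1 u) mulr_sumr -sumrB.
      by apply: eq_bigr => w _; rewrite mulrBr mulrC.
    by rewrite subr_le0 -zu; exact: zs.
  have := psumr_eq0P (P:=predT) (fun w _ => mulr_ge0 (K0 u w) _) H1.
  have H2 : forall w, 0 <= z s0 - z w by move=> w; rewrite subr_ge0.
  move=> /(_ H2 v isT) /eqP; rewrite mulf_eq0 => /orP [].
    by move: euv; rewrite /edge => /gt_eqF ->.
  by rewrite subr_eq0 => /eqP ->.
have /connectP [p pth lst] := Kc s0.
have key : forall p y, path (edge K) y p -> z y = z s0 -> z (last y p) = z s0.
  elim=> [//|x q IH] y /= /andP [exy pq] zy.
  by apply: IH => //; exact: clos exy.
have := key p s0 pth (erefl _); rewrite -lst => ezt.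
by move: zt; rewrite ezt leNgt Mpos.
Qed.


Lemma exists_rec (e : rel S) s :
  exists t, connect e s t /\ (forall u, connect e t u -> connect e u t).
Proof.
suff H : forall n s, (#|[set u | connect e s u]| < n)%N ->
  exists t, connect e s t /\ (forall u, connect e t u -> connect e u t).
  exact: (H _ s (ltnSn _)).
elim=> [//|n IH] x Hx.
case: (boolP [forall u, connect e x u ==> connect e u x]) => [/forallP H|].
  by exists x; split => // u; move/implyP: (H u).
rewrite negb_forall => /existsP [u]; rewrite negb_imply => /andP [xu nux].
have sub : [set w | connect e u w] \proper [set w | connect e x w].
  apply/properP; split.
    apply/subsetP => w; rewrite !inE => uw; exact: connect_trans xu uw.
  by exists x; rewrite !inE ?connect0 // nux.
have lt : (#|[set w | connect e u w]| < n)%N.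
  by rewrite -ltnS; apply: leq_trans Hx; exact: proper_card sub.
have [t [ut Ht]] := IH u lt.
by exists t; split => //; exact: connect_trans xu ut.
Qed.

Lemma maxp_eq (K : S -> S -> R) (t : S) (z : S -> R) :
  (forall s u, 0 <= K s u) -> (forall s, \sum_u K s u = 1) ->
  (forall s, connect (edge K) s t) -> z t = 0 ->
  (forall s, s != t -> z s = \sum_u K s u * z u) -> forall s, z s = 0.
Proof.
move=> K0 K1 Kc zt zs s; apply/eqP; rewrite eq_le; apply/andP; split.
  by apply: (maxp K0 K1 Kc) => [|u /zs ->]; rewrite ?zt.
rewrite -oppr_le0; apply: (maxp (z := fun u => - z u) K0 K1 Kc) => [|u /zs ->].
  by rewrite zt oppr0.
rewrite -sumrN le_eqVlt; apply/orP; left; apply/eqP.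
by apply: eq_bigr => w _; rewrite mulrN.
Qed.

Lemma exists_hit (K : S -> S -> R) (t : S) :
  (forall s u, 0 <= K s u) -> (forall s, \sum_u K s u = 1) ->
  (forall s, connect (edge K) s t) -> exists m, hitting_times K t m.
Proof.
move=> K0 K1 Kc.
pose n := #|S|.
pose A : 'M[R]_n := \matrix_(i, j) ((i == j)%:R -
   (enum_val j != t)%:R * K (enum_val j) (enum_val i)).
pose b : 'rV[R]_n := \row_j (enum_val j != t)%:R.
have sumE : forall (u : 'rV[R]_n) j, (u *m A) 0 j =
    u 0 j - (enum_val j != t)%:R * \sum_w K (enum_val j) w * u 0 (enum_rank w).
  move=> u j; rewrite mxE.
  rewrite (eq_bigr (fun i => u 0 i * (i == j)%:R -
     (enum_val j != t)%:R * (K (enum_val j) (enum_val i) * u 0 i))); last first.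
    move=> i _; rewrite !mxE mulrBr; congr (_ - _); rewrite mulrCA; congr (_ * _); exact: mulrC.
  rewrite sumrB -mulr_sumr; congr (_ - _ * _).
    rewrite (bigD1 j) //= eqxx mulr1 big1 ?addr0 // => i /negbTE ->.
    by rewrite mulr0.
  rewrite (reindex enum_rank); last by apply: onW_bij; exact: enum_rank_bij.
  by apply: eq_bigr => w _; rewrite enum_rankK.
have unitA : A \in unitmx.
  rewrite -row_free_unit -kermx_eq0; apply/eqP/row_matrixP => i.
  rewrite row0; set u := row i (kermx A).
  have u0 : u *m A = 0 by rewrite /u -row_mul mulmx_ker row0.
  clearbody u.
  pose z := fun w : S => (u 0 (enum_rank w) : R).
  have zE : forall w, z w = 0.
    apply: (@maxp_eq K t z K0 K1 Kc).
      have := congr1 (fun M : 'M[R]_(1,n) => M 0 (enum_rank t)) u0.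
      by rewrite sumE !mxE enum_rankK eqxx /= mul0r subr0.
    move=> w wt; have := congr1 (fun M : 'M[R]_(1,n) => M 0 (enum_rank w)) u0.
    rewrite sumE !mxE enum_rankK wt mul1r => /eqP; rewrite subr_eq0 => /eqP.
    by rewrite /z.
  apply/rowP => j; rewrite mxE; have := zE (enum_val j).
  by rewrite /z enum_valK.
pose v := b *m invmx A.
have vA : v *m A = b by rewrite /v mulmxKV.
exists (fun w => v 0 (enum_rank w)); split.
  have := congr1 (fun M : 'M[R]_(1,n) => M 0 (enum_rank t)) vA.
  by rewrite sumE !mxE enum_rankK eqxx /= mul0r subr0.
move=> w wt; have := congr1 (fun M : 'M[R]_(1,n) => M 0 (enum_rank w)) vA.
rewrite sumE !mxE enum_rankK wt mul1r => /eqP; rewrite subr_eq addrC => /eqP.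
by [].
Qed.

Lemma sum_abs_le (D x : S -> R) B : (forall u, `|x u| <= B) ->
  `|\sum_u D u * x u| <= (\sum_u `|D u|) * B.
Proof.
move=> Hx; apply: le_trans (ler_norm_sum _ _ _) _.
rewrite mulr_suml; apply: ler_sum => u _; rewrite normrM.
by apply: ler_wpM2l => //; exact: normr_ge0.
Qed.

Lemma half_bound (D x : S -> R) B : \sum_u D u = 0 ->
  (forall u, 0 <= x u <= B) -> `|\sum_u D u * x u| <= (\sum_u `|D u|) * (B / 2).
Proof.
move=> D0 Hx.
have -> : \sum_u D u * x u = \sum_u D u * (x u - B / 2).
  rewrite [RHS](eq_bigr (fun u => D u * x u - D u * (B / 2))); last first.
    by move=> u _; rewrite mulrBr.
  by rewrite sumrB -mulr_suml D0 mul0r subr0.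
apply: sum_abs_le => u; rewrite ler_norml; have := Hx u => /andP [h1 h2].
apply/andP; split; lra.
Qed.

Lemma gain_le (K : S -> S -> R) (g : R) (x y : S -> R) (s0 : S) :
  (forall s u, 0 <= K s u) -> (forall s, \sum_u K s u = 1) ->
  (forall s, g + x s = y s + \sum_u K s u * x u) -> exists s1, g <= y s1.
Proof.
move=> K0 K1 Hp; have [s1 Hs1] := exists_max x s0; exists s1.
have : \sum_u K s1 u * x u <= x s1.
  rewrite -[leRHS]mul1r -(K1 s1) mulr_suml; apply: ler_sum => u _.
  by apply: ler_wpM2l.
by have := Hp s1; lra.
Qed.

Lemma bound_by (K : S -> S -> R) (t : S) (x phi : S -> R) (F : R) :
  (forall s u, 0 <= K s u) -> (forall s, \sum_u K s u = 1) ->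
  (forall s, connect (edge K) s t) -> 0 <= F -> x t <= 0 -> 0 <= phi t ->
  (forall s, s != t -> x s <= F + \sum_u K s u * x u) ->
  (forall s, s != t -> 1 + \sum_u K s u * phi u <= phi s) ->
  forall s, x s <= F * phi s.
Proof.
move=> K0 K1 Kc F0 xt pt Hx Hphi s; rewrite -subr_le0.
apply: (@maxp K t (fun u => x u - F * phi u) K0 K1 Kc) => [|u ut].
  by rewrite subr_le0; apply: le_trans xt _; exact: mulr_ge0.
have -> : \sum_w K u w * (x w - F * phi w) =
   \sum_w K u w * x w - F * \sum_w K u w * phi w.
  rewrite mulr_sumr -sumrB; apply: eq_bigr => w _; rewrite mulrBr.
  by congr (_ - _); rewrite mulrCA.
have h1 := Hx u ut; have h2 := Hphi u ut.
have h3 : F * (1 + \sum_w K u w * phi w) <= F * phi u by exact: ler_wpM2l.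
rewrite mulrDr mulr1 in h3; lra.
Qed.

Lemma le_bigmax0 (F : S -> R) s : F s <= \big[Num.max/0]_(i : S) F i.
Proof.
rewrite unlock; elim: (index_enum S) (mem_index_enum s) => [//|x l IH].
rewrite inE /= le_max => /orP [/eqP <-|/IH ->]; first by rewrite lexx.
by rewrite orbT.
Qed.

Lemma row_dist (P Ph : kernel R S) a s :
  \sum_u `|P a s u - Ph a s u| <= mdp_dist P Ph.
Proof.
rewrite /mdp_dist; case: a; rewrite le_max.
  by rewrite (le_bigmax0 (fun s => \sum_u `|P true s u - Ph true s u|)) orbT.
by rewrite (le_bigmax0 (fun s => \sum_u `|P false s u - Ph false s u|)).
Qed.

Lemma sumBl (A B f : S -> R) :
  \sum_u (A u - B u) * f u = \sum_u A u * f u - \sum_u B u * f u.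
Proof. by rewrite -sumrB; apply: eq_bigr => u _; rewrite mulrBl. Qed.

Lemma sumBr (A f g : S -> R) :
  \sum_u A u * (f u - g u) = \sum_u A u * f u - \sum_u A u * g u.
Proof. by rewrite -sumrB; apply: eq_bigr => u _; rewrite mulrBr. Qed.

Lemma sumDr (A f g : S -> R) :
  \sum_u A u * (f u + g u) = \sum_u A u * f u + \sum_u A u * g u.
Proof. by rewrite -big_split; apply: eq_bigr => u _; rewrite mulrDr. Qed.

Lemma sumNr (A f : S -> R) :
  \sum_u A u * (- f u) = - \sum_u A u * f u.
Proof. by rewrite -sumrN; apply: eq_bigr => u _; rewrite mulrN. Qed.

Lemma sumCr (A : S -> R) k : \sum_u A u * k = (\sum_u A u) * k.
Proof. by rewrite mulr_suml. Qed.

Lemma le_sum1 (F : S -> R) s : (forall u, 0 <= F u) -> F s <= \sum_u F u.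
Proof.
move=> F0; rewrite (bigD1 s) //= lerDl; apply: sumr_ge0 => u _; exact: F0.
Qed.
End Aux.

Unset Implicit Arguments.

Theorem mainTheorem6 (R : realType) (S : finType) (P : kernel R S) (r : rewards R S)
    (widx : S -> R) :
  mdp_stochastic P -> unichain P -> whittle_indices P r widx ->
  forall a b : R, exists c : R,
    forall Ph : kernel R S,
      mdp_stochastic Ph -> same_support P Ph -> assumptionA P widx Ph ->
      forall (s : S) (pi : {set S}) (lam : R), a <= lam <= b ->
      forall (g : R) (h : S -> R) (gh : R) (hh : S -> R),
        poisson (Ppol P pi) (rpol r lam pi) g h ->
        poisson (Ppol Ph pi) (rpol r lam pi) gh hh ->
        `|alpha P r lam h s - alpha Ph r lam hh s| <= c * mdp_dist P Ph.
Proof.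
move=> Pst Puni Wh a b.
case: (pickP (@predT S)) => [s0 _|S0]; last first.
  by exists 0 => Ph _ _ _ s; have := S0 s.
have stoch : forall (Q : kernel R S) pi, mdp_stochastic Q ->
    (forall s u, 0 <= Ppol Q pi s u) /\ (forall s, \sum_u Ppol Q pi s u = 1).
  move=> Q pi Qst; split=> [s u|s]; have [Q0 Q1] := Qst (s \in pi); [exact: Q0|exact: Q1].
have Hpi : forall pi : {set S}, exists tm : S * (S -> R),
   [/\ (forall s, connect (edge (Ppol P pi)) s tm.1), recurrent (Ppol P pi) tm.1,
   hitting_times (Ppol P pi) tm.1 tm.2 & (forall s, 0 <= tm.2 s)].
  move=> pi; have [K0 K1] := stoch P pi Pst.
  have [t [_ rt]] := exists_rec (edge (Ppol P pi)) s0.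
  have Kc : forall s, connect (edge (Ppol P pi)) s t.
    move=> s; have [t' [st' rt']] := exists_rec (edge (Ppol P pi)) s.
    exact: connect_trans st' (Puni pi t' t rt' rt).
  have [m hm] := exists_hit K0 K1 Kc.
  exists (t, m); split => // s; rewrite -oppr_le0.
  apply: (@maxp _ _ (Ppol P pi) t (fun u => - m u) K0 K1 Kc).
    by case: hm => /= -> _; rewrite oppr0.
  move=> u ut; case: hm => _ /= /(_ u ut) ->.
  rewrite sumNr; lra.
have [TM HTM] := fin_all_exists Hpi.
pose K := \sum_pi \sum_s (TM pi).2 s.
pose R0 := \sum_s (`|r true s| + `|r false s|) + `|a| + `|b|.
pose H := 2 * R0 * K.
exists (2 * H + 8 * H * K).
move=> Ph Phst supp [A1 _] s pi lam /andP [alam lamb] g h gh hh Hh Hhh.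
have [Kc rt hm m0] := HTM pi.
set t := (TM pi).1 in Kc rt hm m0 *.
set m := (TM pi).2 in Kc rt hm m0 *.
set M := Ppol P pi in Kc rt hm Hh *.
set N := Ppol Ph pi in Hhh *.
set d := mdp_dist P Ph.
set rv := rpol r lam pi in Hh Hhh.
have [M0 M1] := stoch P pi Pst.
have [N0 N1] := stoch Ph pi Phst.
have rowd : forall u, \sum_w `|N u w - M u w| <= d.
  move=> u; rewrite /d; apply: le_trans (row_dist P Ph (u \in pi) u).
  by rewrite le_eqVlt; apply/orP; left; apply/eqP; apply: eq_bigr => w _; rewrite distrC.
have d0 : 0 <= d.
  by apply: le_trans (rowd s0); apply: sumr_ge0 => w _; exact: normr_ge0.
have Nc : forall u, connect (edge N) u t.
  move=> u; rewrite (@eq_connect _ _ (edge M)) //.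
  by move=> x y; rewrite /edge /N /M /Ppol supp.
have K0 : 0 <= K.
  by apply: sumr_ge0 => pi' _; apply: sumr_ge0 => u _; have [] := HTM pi'.
have mK : forall u, m u <= K.
  move=> u; apply: le_trans (le_sum1 _ m0) _.
  apply: (le_sum1 (F := fun pi' => \sum_s (TM pi').2 s)) => pi'.
  by apply: sumr_ge0 => w _; have [] := HTM pi'.
have dm : forall u, d * m u <= 1 by move=> u; exact: A1 pi u t m rt hm.
have R00 : 0 <= R0.
  rewrite /R0 !addr_ge0 //; apply: sumr_ge0 => w _; exact: addr_ge0.
have rvb : forall u, `|rv u| <= R0.
  move=> u; have la : `|lam| <= `|a| + `|b|.
    rewrite ler_norml; apply/andP; split.
      have := ler_norm (- a); rewrite normrN; have := normr_ge0 b; lra.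
    have := ler_norm a; have := ler_norm b; have := normr_ge0 a; lra.
  have rs : `|r true u| + `|r false u| <= \sum_w (`|r true w| + `|r false w|).
    by apply: (le_sum1 (F := fun w => `|r true w| + `|r false w|)) => w; exact: addr_ge0.
  rewrite /rv /rpol /R0; case: (u \in pi).
    apply: le_trans (ler_normB _ _) _.
    have := normr_ge0 (r false u); lra.
  have := normr_ge0 (r true u); have := normr_ge0 a; have := normr_ge0 b; lra.
pose h' := fun u => h u - h t.
have Ph' : forall u, g + h' u = rv u + \sum_w M u w * h' w.
  move=> u; rewrite /h' sumBr sumCr M1 mul1r; have := Hh u; lra.
have gb : `|g| <= R0.
  rewrite ler_norml; apply/andP; split.
    have Pn : forall u, - g + - h' u = - rv u + \sum_w M u w * - h' w.
      by move=> u; rewrite sumNr; have := Ph' u; lra.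
    have [s1 Hs1] := gain_le s0 M0 M1 Pn.
    have := rvb s1; rewrite ler_norml; lra.
  have [s1 Hs1] := gain_le s0 M0 M1 Ph'.
  by have := rvb s1; rewrite ler_norml; lra.
have ht : h' t = 0 by rewrite /h' subrr.
have mt : m t = 0 by case: hm.
have mrec : forall u, u != t -> 1 + \sum_w M u w * m w <= m u.
  by move=> u ut; case: hm => _ /(_ u ut) ->.
have hb : forall u, `|h' u| <= H.
  have F0 : 0 <= 2 * R0 by lra.
  have up : forall u, h' u <= 2 * R0 * m u.
    apply: (@bound_by R S M t h' m (2 * R0) M0 M1 Kc F0 _ _ _ mrec).
    - by rewrite ht.
    - by rewrite mt.
    move=> u _; have := Ph' u; have := rvb u; rewrite ler_norml.
    have := gb; rewrite ler_norml; lra.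
  have lo : forall u, - h' u <= 2 * R0 * m u.
    apply: (@bound_by R S M t (fun u => - h' u) m (2 * R0) M0 M1 Kc F0 _ _ _ mrec).
    - by rewrite ht oppr0.
    - by rewrite mt.
    move=> u _; rewrite sumNr; have := Ph' u; have := rvb u; rewrite ler_norml.
    have := gb; rewrite ler_norml; lra.
  move=> u; rewrite ler_norml; have := up u; have := lo u.
  have : 2 * R0 * m u <= H by rewrite /H; apply: ler_wpM2l => //.
  lra.
pose hh' := fun u => hh u - hh t.
have Phh' : forall u, gh + hh' u = rv u + \sum_w N u w * hh' w.
  move=> u; rewrite /hh' sumBr sumCr N1 mul1r; have := Hhh u; lra.
pose x := fun u => hh' u - h' u.
pose y := fun u => \sum_w (N u w - M u w) * h' w.
have Px : forall u, (gh - g) + x u = y u + \sum_w N u w * x w.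
  move=> u; rewrite /x /y sumBr sumBl; have := Phh' u; have := Ph' u; lra.
have yb : forall u, `|y u| <= d * H.
  move=> u; apply: le_trans (sum_abs_le _ hb) _.
  apply: ler_wpM2r => //.
  by apply: le_trans (hb u); exact: normr_ge0.
have H0 : 0 <= H by apply: le_trans (hb s0); exact: normr_ge0.
have gdb : `|gh - g| <= d * H.
  rewrite ler_norml; apply/andP; split.
    have Pn : forall u, - (gh - g) + - x u = - y u + \sum_w N u w * - x w.
      by move=> u; rewrite sumNr; have := Px u; lra.
    have [s1 Hs1] := gain_le s0 N0 N1 Pn.
    have := yb s1; rewrite ler_norml; lra.
  have [s1 Hs1] := gain_le s0 N0 N1 Px.
  by have := yb s1; rewrite ler_norml; lra.
have [smax Hsmax] := exists_max m s0.
have Nm : forall u, u != t -> 1 + \sum_w N u w * (2 * m w) <= 2 * m u.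
  move=> u ut.
  have e1 : \sum_w N u w * m w =
      \sum_w M u w * m w + \sum_w (N u w - M u w) * m w.
    by rewrite sumBl; lra.
  have hb2 : `|\sum_w (N u w - M u w) * m w| <= (\sum_w `|N u w - M u w|) * (m smax / 2).
    apply: half_bound => [|w]; first by rewrite sumrB N1 M1 subrr.
    by rewrite m0 Hsmax.
  have hb3 : (\sum_w `|N u w - M u w|) * (m smax / 2) <= d * (m smax / 2).
    by apply: ler_wpM2r => //; apply: divr_ge0 => //; exact: m0.
  have := dm smax; have := mrec u ut.
  have -> : \sum_w N u w * (2 * m w) = 2 * \sum_w N u w * m w.
    by rewrite mulr_sumr; apply: eq_bigr => w _; rewrite mulrCA.
  move: hb2; rewrite e1 ler_norml; lra.
have xt : x t = 0 by rewrite /x /hh' ht subrr subr0.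
have xb : forall u, `|x u| <= 4 * d * H * K.
  have F0 : 0 <= 2 * (d * H) by apply: mulr_ge0 => //; exact: mulr_ge0.
  have mt2 : 0 <= 2 * m t by rewrite mt mulr0.
  have up : forall u, x u <= 2 * (d * H) * (2 * m u).
    apply: (@bound_by R S N t x (fun u => 2 * m u) _ N0 N1 Nc F0 _ mt2 _ Nm).
      by rewrite xt.
    move=> u _; have := Px u; have := yb u; rewrite ler_norml.
    have := gdb; rewrite ler_norml; lra.
  have lo : forall u, - x u <= 2 * (d * H) * (2 * m u).
    apply: (@bound_by R S N t (fun u => - x u) (fun u => 2 * m u) _ N0 N1 Nc F0 _ mt2 _ Nm).
      by rewrite xt oppr0.
    move=> u _; rewrite sumNr; have := Px u; have := yb u; rewrite ler_norml.
    have := gdb; rewrite ler_norml; lra.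
  move=> u; rewrite ler_norml; have := up u; have := lo u.
  have : 2 * (d * H) * (2 * m u) <= 4 * d * H * K.
    have -> : 2 * (d * H) * (2 * m u) = (4 * d * H) * m u by ring.
    apply: ler_wpM2l => //; apply: mulr_ge0 => //; apply: mulr_ge0 => //; lra.
  lra.
have [_ P1s] := Pst true; have [_ P0s] := Pst false.
have [_ Ph1s] := Phst true; have [_ Ph0s] := Phst false.
have e1 : \sum_w (P true s w - P false s w) * h w =
    \sum_w P true s w * h' w - \sum_w P false s w * h' w.
  rewrite -sumBl /h' sumBr sumCr sumrB P1s P0s subrr mul0r subr0 //.
have e2 : \sum_w (Ph true s w - Ph false s w) * hh w =
    \sum_w Ph true s w * h' w - \sum_w Ph false s w * h' w +
    (\sum_w Ph true s w * x w - \sum_w Ph false s w * x w).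
  rewrite -!sumBl -sumDr.
  have -> : \sum_w (Ph true s w - Ph false s w) * hh w =
     \sum_w (Ph true s w - Ph false s w) * hh' w.
    by rewrite /hh' sumBr sumCr sumrB Ph1s Ph0s subrr mul0r subr0.
  by apply: eq_bigr => w _; rewrite /x; congr (_ * _); ring.
have bA : `|\sum_w (P true s w - Ph true s w) * h' w| <= d * H.
  apply: le_trans (sum_abs_le _ hb) _; apply: ler_wpM2r => //.
  exact: row_dist.
have bB : `|\sum_w (P false s w - Ph false s w) * h' w| <= d * H.
  apply: le_trans (sum_abs_le _ hb) _; apply: ler_wpM2r => //.
  exact: row_dist.
have bC : `|\sum_w (Ph true s w - Ph false s w) * x w| <= 2 * (4 * d * H * K).
  apply: le_trans (sum_abs_le _ xb) _; apply: ler_wpM2r.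
    by apply: le_trans (xb s0); exact: normr_ge0.
  have <- : \sum_w (Ph true s w + Ph false s w) = 2 by rewrite big_split /= Ph1s Ph0s.
  apply: ler_sum => w _; apply: le_trans (ler_normB _ _) _.
  have [Q0 _] := Phst true; have [Q0' _] := Phst false.
  by rewrite !ger0_norm.
move: bA bB bC; rewrite !sumBl !ler_norml /alpha e1 e2 => /andP [a1 a2] /andP [b1 b2] /andP [c1 c2].
apply/andP; split; lra.
Qed.
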